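(* Let $n\ge 2$, let $M_1,\ldots,M_k\in\mathrm{H}(n,\mathbb{Q}(\mathrm{i}))$ be such that $M_1M_2\cdots M_k\in\Omega$, and let $\ell\ge1$ be an integer. Write $\psi(M_i)=(\boldsymbol{a}_i,\boldsymbol{b}_i,c_i)$. Consider the word consisting of $\ell$ occurrences of each index $i\in\{1,\ldots,k\}$ arranged in some order (a shuffle of $M_1^\ell M_2^\ell\cdots M_k^\ell$ by a permutation $\sigma$ of its $k\ell$ factors), and let $M$ be the corresponding product. For $i\ne j$ let $z_{ji}$ be the number of pairs (occurrence of $M_j$, occurrence of $M_i$) in this word in which the occurrence of $M_j$ is to the left of the occurrence of $M_i$. Then \[M_{1,n}=\ell\sum_{i=1}^k\Big(c_i-\tfrac12\boldsymbol{a}_i^T\boldsymbol{b}_i\Big)+\frac{\ell^2}{2}\sum_{1\le i<j\le k-1}[M_i,M_j]-\sum_{1\le i<j\le k}z_{ji}[M_i,M_j].\]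
   Context: $\mathbb{Q}(\mathrm{i})=\{a+b\mathrm{i}\mid a,b\in\mathbb{Q}\}$. $\mathrm{H}(n,\mathbb{Q}(\mathrm{i}))$ is the set of $n\times n$ matrices $M=\begin{pmatrix}1&\boldsymbol{m}_1^T&m_3\\ \boldsymbol{0}&\boldsymbol{I}_{n-2}&\boldsymbol{m}_2\\ 0&\boldsymbol{0}^T&1\end{pmatrix}$ with $\boldsymbol{m}_1,\boldsymbol{m}_2\in\mathbb{Q}(\mathrm{i})^{n-2}$, $m_3\in\mathbb{Q}(\mathrm{i})$, and $\psi(M)=(\boldsymbol{m}_1,\boldsymbol{m}_2,m_3)$. $\Omega$ is the set of such matrices with $\boldsymbol{m}_1=\boldsymbol{m}_2=\boldsymbol{0}$. $X_{1,n}$ is the top-right entry of $X$. The commutator is the scalar $[M_i,M_j]=\boldsymbol{a}_i^T\boldsymbol{b}_j-\boldsymbol{a}_j^T\boldsymbol{b}_i\in\mathbb{Q}(\mathrm{i})$ where $\psi(M_i)=(\boldsymbol{a}_i,\boldsymbol{b}_i,c_i)$, $\psi(M_j)=(\boldsymbol{a}_j,\boldsymbol{b}_j,c_j)$. *)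

(* Defs.v *)
From HB Require Import structures.
From mathcomp Require Import all_boot all_order all_algebra all_field.
Set Implicit Arguments. Unset Strict Implicit. Unset Printing Implicit Defensive.
Import Order.TTheory GRing.Theory Num.Theory.
Local Open Scope ring_scope.

Definition gaussQ (x : algC) : Prop :=
  exists p q : rat, x = ratr p + ratr q * 'i.

Definition cV_gaussQ m (v : 'cV[algC]_m) : Prop := forall t, gaussQ (v t 0).

(* value of the t-th entry (0-based) of a column vector, 0 if out of range *)
Definition vget m (v : 'cV[algC]_m) (t : nat) : algC :=
  if insub t is Some o then v o 0 else 0.

(* The matrix of H(n, .) with psi(M) = (m1, m2, m3):
   [[1, m1^T, m3], [0, I_{n-2}, m2], [0, 0^T, 1]]   (indices 0-based) *)
Definition mkH n (m1 m2 : 'cV[algC]_(n - 2)) (m3 : algC) : 'M[algC]_n :=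
  \matrix_(i < n, j < n)
    if i == j :> nat then 1
    else if (val i == 0%N) && (val j == n.-1) then m3
    else if (val i == 0%N) && (0 < j < n.-1)%N then vget m1 j.-1
    else if (0 < i < n.-1)%N && (val j == n.-1) then vget m2 i.-1
    else 0.

Definition topright n : 'M[algC]_n -> algC :=
  match n return 'M[algC]_n -> algC with
  | 0 => fun _ => 0
  | m.+1 => fun X => X ord0 ord_max
  end.

Definition commH m (ai bi aj bj : 'cV[algC]_m) : algC :=
  \sum_(t < m) (ai t 0 * bj t 0) - \sum_(t < m) (aj t 0 * bi t 0).

Definition wprod n k (M : 'I_k -> 'M[algC]_n) (w : seq 'I_k) : 'M[algC]_n :=
  \big[@mulmx _ n n n/1%:M]_(i <- w) M i.

Definition zcount k (w : seq 'I_k) (j i : 'I_k) : nat :=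
  \sum_(p < size w) \sum_(q < size w)
     [&& (p < q)%N, nth j w p == j & nth j w q == i].

Definition blockword k (l : nat) : seq 'I_k :=
  flatten [seq nseq l i | i <- enum 'I_k].

(* Main.v *)
Set Warnings "-notation-overridden,-ambiguous-paths,-notation-incompatible-prefix".
Require Import Defs.
From HB Require Import structures.
From mathcomp Require Import all_boot all_order all_algebra all_field zify ring.
Import Order.TTheory GRing.Theory Num.Theory.
Set Implicit Arguments. Unset Strict Implicit. Unset Printing Implicit Defensive.
Local Open Scope ring_scope.

Definition Nf n m (a b : 'cV[algC]_m) (c : algC) (i j : nat) : algC :=
  if (i == 0%N) && (j == n.-1) then c
  else if (i == 0%N) && (0 < j < n.-1)%N then vget a j.-1
  else if (0 < i < n.-1)%N && (j == n.-1) then vget b i.-1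
  else 0.

Definition Nmx n (a b : 'cV[algC]_(n - 2)) c : 'M[algC]_n :=
  \matrix_(i < n, j < n) Nf n a b c i j.

Lemma vgetD m (a a' : 'cV[algC]_m) t : vget (a + a') t = vget a t + vget a' t.
Proof. by rewrite /vget; case: insub => [o|]; rewrite ?mxE ?addr0. Qed.

Lemma vget0 m t : vget (0 : 'cV[algC]_m) t = 0.
Proof. by rewrite /vget; case: insub => [o|]; rewrite ?mxE. Qed.

Lemma vget_ord m (a : 'cV[algC]_m) (s : 'I_m) : vget a s = a s 0.
Proof. by rewrite /vget valK. Qed.

Lemma mkH_N n (hn : (2 <= n)%N) (a b : 'cV[algC]_(n-2)) c : mkH a b c = 1%:M + Nmx a b c.
Proof.
apply/matrixP => i j; rewrite !mxE /Nf.
case: (eqVneq i j) => [<-|ij]; last first.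
  by rewrite add0r; have /negbTE -> : (i != j :> nat) by [].
rewrite eqxx mulr1n.
have [->|h0] := eqVneq (i : nat) 0%N.
  have /negbTE -> : (0 != n.-1)%N by lia.
  by rewrite /= addr0.
rewrite /=.
rewrite /=.
case: ifP => [/andP[/andP[_ h2] /eqP h3]|_]; [exfalso; lia | by rewrite addr0].
Qed.

Lemma NmxD n (a b a' b' : 'cV[algC]_(n - 2)) c c' :
  Nmx a b c + Nmx a' b' c' = Nmx (a + a') (b + b') (c + c').
Proof.
apply/matrixP => i j; rewrite !mxE /Nf.
by repeat (case: ifP => _); rewrite ?vgetD ?addr0.
Qed.

Lemma NfM n m (hn : (0 < n.-1)%N) (a1 b1 a2 b2 : 'cV[algC]_m) c1 c2 i t j :
  Nf n a1 b1 c1 i t * Nf n a2 b2 c2 t j =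
  if [&& i == 0%N, j == n.-1 & (0 < t < n.-1)%N] then vget a1 t.-1 * vget b2 t.-1 else 0.
Proof.
rewrite /Nf.
repeat (case: ifP => ?); rewrite ?mul0r ?mulr0 //; try (exfalso; lia).

Qed.

Lemma sum_mid n (hn : (2 <= n)%N) (F : nat -> algC) :
  \sum_(t < n) (if (0 < t < n.-1)%N then F t.-1 else 0) = \sum_(s < n - 2) F s.
Proof.
case: n hn => [|[|m]] // _.
have -> : (m.+2 - 2 = m)%N by lia.
rewrite -(big_mkord xpredT (fun t => if (0 < t < m.+1)%N then F t.-1 else 0)).
rewrite -(big_mkord xpredT F).
rewrite big_nat_recl // big_nat_recr //= ltnn add0r addr0.
by apply: eq_big_nat => s /andP[_ hs]; rewrite ltnS hs.
Qed.

Lemma NmxM n (hn : (2 <= n)%N) (a1 b1 a2 b2 : 'cV[algC]_(n - 2)) c1 c2 :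
  Nmx a1 b1 c1 *m Nmx a2 b2 c2 = Nmx 0 0 (\sum_(t < n - 2) a1 t 0 * b2 t 0).
Proof.
apply/matrixP => i j; rewrite !mxE.
have hn' : (0 < n.-1)%N by lia.
under eq_bigr => t _ do rewrite !mxE (@NfM n _ hn').
rewrite /Nf !vget0.
case: ifP => h.
  move/andP: h => [-> ->] /=.
  transitivity (\sum_(s < n-2) vget a1 s * vget b2 s).
    exact: (sum_mid hn (fun s => vget a1 s * vget b2 s)).
  by apply: eq_bigr => s _; rewrite !vget_ord.
rewrite big1.
  by repeat (case: ifP => _).
move=> t _; rewrite andbA h //.
Qed.

Lemma mkH_mul n (hn : (2 <= n)%N) (a1 b1 a2 b2 : 'cV[algC]_(n - 2)) c1 c2 :
  mkH a1 b1 c1 *m mkH a2 b2 c2 =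
  mkH (a1 + a2) (b1 + b2) (c1 + c2 + \sum_(t < n - 2) a1 t 0 * b2 t 0).
Proof.
rewrite !(mkH_N hn) mulmxDl !mulmxDr !mul1mx mulmx1 (NmxM hn).
by rewrite NmxD -addrA (addrC (Nmx a2 b2 c2)) NmxD !addr0 -(addrA c1) (addrC _ c2) addrA.
Qed.

Lemma mkH0 n (hn : (2 <= n)%N) : mkH (0 : 'cV_(n-2)) 0 0 = 1%:M.
Proof.
rewrite (mkH_N hn); apply/matrixP => i j; rewrite !mxE /Nf !vget0.
by repeat (case: ifP => _); rewrite addr0.
Qed.

Lemma topright_mkH n (hn : (2 <= n)%N) (a b : 'cV[algC]_(n-2)) c :
  topright (mkH a b c) = c.
Proof.
case: n hn a b => [|[|m]] // _ a b.
by rewrite /topright mxE /= !eqxx.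
Qed.

Lemma mkH_inj_a n (hn : (2 <= n)%N) (a b a' b' : 'cV[algC]_(n-2)) c c' :
  mkH a b c = mkH a' b' c' -> a = a'.
Proof.
move=> e; apply/matrixP => t z; rewrite (ord1 z).
have h0 : (0 < n)%N by lia.
have h1 : (t.+1 < n)%N by have := ltn_ord t; lia.
have := congr1 (fun X : 'M_n => X (Ordinal h0) (Ordinal h1)) e.
rewrite !mxE /=.
have /negbTE -> : (t.+1 != n.-1)%N by have := ltn_ord t; lia.
have -> : (t.+1 < n.-1)%N by have := ltn_ord t; lia.
by rewrite /= !vget_ord.
Qed.

Lemma mkH_inj_b n (hn : (2 <= n)%N) (a b a' b' : 'cV[algC]_(n-2)) c c' :
  mkH a b c = mkH a' b' c' -> b = b'.
Proof.
move=> e; apply/matrixP => t z; rewrite (ord1 z).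
have h0 : (n.-1 < n)%N by lia.
have h1 : (t.+1 < n)%N by have := ltn_ord t; lia.
have := congr1 (fun X : 'M_n => X (Ordinal h1) (Ordinal h0)) e.
rewrite !mxE /=.
have /negbTE -> : (t.+1 != n.-1)%N by have := ltn_ord t; lia.
have -> : (t.+1 < n.-1)%N by have := ltn_ord t; lia.
by rewrite eqxx /= !vget_ord.
Qed.

Lemma sum_nth_count (T : eqType) (d : T) (w : seq T) (y : T) :
  (\sum_(q < size w) (nth d w q == y))%N = count_mem y w.
Proof.
elim: w => [|x w IH]; first by rewrite big_ord0.
by rewrite /= big_ord_recl /= IH.
Qed.

Lemma zcount_cons k (x : 'I_k) w i j :
  zcount (x :: w) i j = (zcount w i j + (x == i) * count_mem j w)%N.
Proof.
rewrite /zcount /= big_ord_recl /= big_ord_recl /= add0n.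
under eq_bigr => q _ do rewrite add0n.
rewrite addnC; congr (_ + _)%N; last first.
  case: (x == i); rewrite ?mul1n ?mul0n ?sum_nth_count //.
  by rewrite big1.
apply: eq_bigr => p _; rewrite big_ord_recl /= add0n.
by apply: eq_bigr => q _; rewrite /bump /= !add0n !add1n ltnS.
Qed.

Lemma zsym k (w : seq 'I_k) i j : i != j ->
  (zcount w i j + zcount w j i = count_mem i w * count_mem j w)%N.
Proof.
move=> ij; elim: w => [|x w IH]; first by rewrite /zcount !big_ord0.
rewrite !zcount_cons /=.
have [->|xi] := eqVneq x i.
  rewrite (negbTE ij) /= mul1n mul0n addn0 add0n mulnDl mul1n -IH; lia.
case: eqP => _; rewrite /= ?mul1n ?mul0n ?addn0 ?add0n ?mulnDr ?muln1 -IH; lia.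
Qed.

Lemma zdiag k (w : seq 'I_k) i :
  (2 * zcount w i i = count_mem i w * (count_mem i w - 1))%N.
Proof.
elim: w => [|x w IH]; first by rewrite /zcount !big_ord0.
rewrite !zcount_cons /=.
case: eqP => _; rewrite /= ?mul1n ?mul0n ?addn0 ?add0n //.
move: IH; case: (count_mem i w) => [|c]; rewrite ?add1n ?subn1 /= ?addn0 ?muln0 ?mul0n; nia.
Qed.

Lemma sum_count k (w : seq 'I_k) (F : 'I_k -> algC) :
  \sum_j (count_mem j w)%:R * F j = \sum_(y <- w) F y.
Proof.
elim: w => [|y w IH]; first by rewrite big_nil big1 // => j _; rewrite mul0r.
rewrite big_cons -IH /=.
under eq_bigr => j _ do rewrite natrD mulrDl.
rewrite big_split /=; congr (_ + _).
rewrite (bigD1 y) //= eqxx mul1r big1 ?addr0 // => j /negbTE.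
by rewrite eq_sym => ->; rewrite mul0r.
Qed.

Lemma Tcons k (x : 'I_k) w (D : 'I_k -> 'I_k -> algC) :
  \sum_i \sum_j (zcount (x :: w) i j)%:R * D i j =
  \sum_i \sum_j (zcount w i j)%:R * D i j + \sum_(y <- w) D x y.
Proof.
under eq_bigr => i _ do under eq_bigr => j _ do rewrite zcount_cons natrD mulrDl.
under eq_bigr => i _ do rewrite big_split /=.
rewrite big_split /=; congr (_ + _).
rewrite (bigD1 x) //= [X in _ + X]big1 ?addr0.
  rewrite -(sum_count w (D x)); apply: eq_bigr => j _; by rewrite eqxx mul1n.
move=> i /negbTE; rewrite eq_sym => ->.
by rewrite big1 // => j _; rewrite mul0n mul0r.
Qed.

Lemma wprod_formula n k (hn : (2 <= n)%N) (M : 'I_k -> 'M[algC]_n)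
  (a b : 'I_k -> 'cV[algC]_(n - 2)) (c : 'I_k -> algC)
  (hpsi : forall i, M i = mkH (a i) (b i) (c i)) w :
  wprod M w = mkH (\sum_(x <- w) a x) (\sum_(x <- w) b x)
    (\sum_(x <- w) c x + \sum_i \sum_j (zcount w i j)%:R *
        \sum_(t < n - 2) a i t 0 * b j t 0).
Proof.
elim: w => [|x w IH].
  rewrite /wprod !big_nil add0r big1 ?mkH0 // => i _.
  by rewrite big1 // => j _; rewrite /zcount big_ord0 mul0r.
rewrite /wprod big_cons -/(wprod M w) IH hpsi (mkH_mul hn) Tcons !big_cons.
congr mkH.
rewrite -!addrA; congr (_ + (_ + (_ + _))).
under eq_bigr => t _ do rewrite summxE mulr_sumr.
by rewrite exchange_big.
Qed.

Lemma split3 k (F : 'I_k -> 'I_k -> algC) :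
  \sum_(i < k) \sum_(j < k) F i j = (\sum_(i < k) F i i) + (\sum_(i < k) \sum_(j < k | (i < j)%N) F i j)
                         + (\sum_(i < k) \sum_(j < k | (i < j)%N) F j i).
Proof.
have inner : forall i, \sum_(j < k) F i j = F i i + (\sum_(j < k | (i < j)%N) F i j)
                                     + (\sum_(j < k | (j < i)%N) F i j).
  move=> i; rewrite (bigD1 i) //= -addrA; congr (_ + _).
  rewrite (bigID (fun j : 'I_k => (i < j)%N)) /=; congr (_ + _).
    apply: eq_bigl => j; rewrite -(inj_eq val_inj) /=; lia.
  apply: eq_bigl => j; rewrite -(inj_eq val_inj) /=; lia.
under eq_bigr => i _ do rewrite inner.
rewrite !big_split /=; congr (_ + _).
under eq_bigr => i _ do rewrite big_mkcond.
rewrite exchange_big /=.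
by apply: eq_bigr => i _; rewrite [RHS]big_mkcond.
Qed.

Lemma corr k (D : 'I_k -> 'I_k -> algC)
  (hrow : forall i, \sum_(j < k) D i j = 0) (hcol : forall j, \sum_(i < k) D i j = 0) :
  \sum_(i < k) \sum_(j < k | (i < j)%N && (j < k.-1)%N) (D i j - D j i) =
  \sum_(i < k) \sum_(j < k | (i < j)%N) (D i j - D j i).
Proof.
case: k D hrow hcol => [|k] D hrow hcol; first by rewrite !big_ord0.
have e : forall i : 'I_k.+1, \sum_(j < k.+1 | (i < j)%N) (D i j - D j i) =
   \sum_(j < k.+1 | (i < j)%N && (j < k)%N) (D i j - D j i) +
   (if (i < k)%N then D i ord_max - D ord_max i else 0).
  move=> i; rewrite big_mkcond [in RHS]big_mkcond !big_ord_recr /= ltnn andbF addr0.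
  congr (_ + _); apply: eq_bigr => j _; by rewrite ltn_ord andbT.
under [RHS]eq_bigr => i _ do rewrite e.
rewrite big_split /= [X in _ = _ + X]big_ord_recr /= ltnn addr0.
rewrite [X in _ = _ + X](_ : _ = 0) ?addr0 //.
under eq_bigr => i _ do rewrite ltn_ord.
rewrite sumrB.
have h1 := hcol ord_max; have h2 := hrow ord_max.
rewrite big_ord_recr /= in h1; rewrite big_ord_recr /= in h2.
have -> : \sum_(i < k) D (widen_ord (leqnSn k) i) ord_max = - D ord_max ord_max.
  by apply/eqP; rewrite -addr_eq0 h1.
have -> : \sum_(i < k) D ord_max (widen_ord (leqnSn k) i) = - D ord_max ord_max.
  by apply/eqP; rewrite -addr_eq0 h2.
by rewrite subrr.
Qed.

Lemma alg k (l : nat) (D N : 'I_k -> 'I_k -> algC)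
  (hrow : forall i, \sum_(j < k) D i j = 0) (hcol : forall j, \sum_(i < k) D i j = 0)
  (hN : forall i j, i != j -> N i j + N j i = (l ^ 2)%:R)
  (hd : forall i, 2 * N i i = l%:R * (l%:R - 1)) :
  \sum_(i < k) \sum_(j < k) N i j * D i j =
  - (l%:R / 2) * (\sum_(i < k) D i i)
  + (l ^ 2)%:R / 2 * (\sum_(i < k) \sum_(j < k | (i < j)%N && (j < k.-1)%N) (D i j - D j i))
  - \sum_(i < k) \sum_(j < k | (i < j)%N) N j i * (D i j - D j i).
Proof.
have two : (2 : algC) != 0 by rewrite pnatr_eq0.
rewrite (corr hrow hcol).
have hz := split3 D.
rewrite big1 in hz; last by move=> i _; exact: hrow.
rewrite split3.
have -> : \sum_(i < k) N i i * D i i = (l%:R * (l%:R - 1) / 2) * \sum_(i < k) D i i.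
  rewrite mulr_sumr; apply: eq_bigr => i _; by rewrite -(hd i) (mulrC 2) mulfK.
have eY : \sum_(i < k) \sum_(j < k | (i < j)%N) N j i * (D i j - D j i) =
  (l ^ 2)%:R * (\sum_(i < k) \sum_(j < k | (i < j)%N) D i j)
  - (\sum_(i < k) \sum_(j < k | (i < j)%N) N i j * D i j)
  - (\sum_(i < k) \sum_(j < k | (i < j)%N) N j i * D j i).
  rewrite mulr_sumr -!sumrB; apply: eq_bigr => i _.
  rewrite mulr_sumr -!sumrB; apply: eq_bigr => j ij.
  have ij' : i != j by rewrite -(inj_eq val_inj) /=; lia.
  rewrite -(hN _ _ ij'); ring.
rewrite eY.
under [X in _ = _ + _ * X - _]eq_bigr => i _ do rewrite sumrB.
rewrite sumrB.
move: hz.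
set Dg := \sum_(i < k) D i i.
set U := \sum_(i < k) \sum_(j < k | (i < j)%N) D i j.
set L := \sum_(i < k) \sum_(j < k | (i < j)%N) D j i.
move=> hz.
have eD : Dg = - U - L.
  rewrite -[LHS]subr0 hz; ring.
by rewrite eD; field.
Qed.

Lemma big_enum_ord (R : Type) (idx : R) (op : R -> R -> R) k (F : 'I_k -> R) :
  \big[op/idx]_(j <- enum 'I_k) F j = \big[op/idx]_(j < k) F j.
Proof. by rewrite enumT unlock. Qed.

Lemma count_block k l (i : 'I_k) : count_mem i (blockword k l) = l.
Proof.
rewrite /blockword count_flatten sumnE big_map (big_map (fun j => nseq l j)) big_enum_ord /=.
under eq_bigr => j _ do rewrite count_nseq /=.
rewrite (bigD1 i) //= eqxx mul1n big1 ?addn0 // => j /negbTE.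
by rewrite eq_sym => ->.
Qed.

Theorem lemma4 (n k l : nat) (hn : (2 <= n)%N) (hl : (1 <= l)%N)
  (M : 'I_k -> 'M[algC]_n)
  (a b : 'I_k -> 'cV[algC]_(n - 2)) (c : 'I_k -> algC)
  (hQa : forall i, cV_gaussQ (a i)) (hQb : forall i, cV_gaussQ (b i))
  (hQc : forall i, gaussQ (c i))
  (hpsi : forall i, M i = mkH (a i) (b i) (c i))
  (hOmega : exists c0 : algC, gaussQ c0 /\
     wprod M (enum 'I_k) = mkH 0 0 c0)
  (w : seq 'I_k) (hw : perm_eq w (blockword k l)) :
  topright (wprod M w) =
    l%:R * (\sum_(i < k) (c i - 2^-1 * \sum_(t < n - 2) (a i t 0 * b i t 0)))
    + (l ^ 2)%:R / 2 *
        (\sum_(i < k) \sum_(j < k | (i < j)%N && (j < k.-1)%N)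
            commH (a i) (b i) (a j) (b j))
    - \sum_(i < k) \sum_(j < k | (i < j)%N)
        (zcount w j i)%:R * commH (a i) (b i) (a j) (b j).
Proof.
have cnt : forall i, count_mem i w = l.
  by move=> i; rewrite (permP hw) count_block.
case: hOmega => c0 [_ hO].
rewrite (wprod_formula hn hpsi) in hO.
have ha := mkH_inj_a hn hO; have hb := mkH_inj_b hn hO.
rewrite big_enum_ord in ha; rewrite big_enum_ord in hb.
have hrow : forall i, \sum_(j < k) (\sum_(t < n - 2) a i t 0 * b j t 0) = 0.
  move=> i; rewrite exchange_big /=; apply: big1 => t _.
  by rewrite -mulr_sumr -summxE hb mxE mulr0.
have hcol : forall j, \sum_(i < k) (\sum_(t < n - 2) a i t 0 * b j t 0) = 0.
  move=> j; rewrite exchange_big /=; apply: big1 => t _.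
  by rewrite -mulr_suml -summxE ha mxE mul0r.
have hN : forall i j, i != j ->
    (zcount w i j)%:R + (zcount w j i)%:R = (l ^ 2)%:R :> algC.
  by move=> i j ij; rewrite -natrD zsym // !cnt.
have hd : forall i, 2 * (zcount w i i)%:R = l%:R * (l%:R - 1) :> algC.
  move=> i; have := zdiag w i; rewrite !cnt => e.
  by rewrite -natrM e natrM natrB.
have := alg hrow hcol hN hd.
rewrite /= => hT.
rewrite (wprod_formula hn hpsi) (topright_mkH hn) hT.
rewrite -sum_count.
have -> : \sum_(j < k) (count_mem j w)%:R * c j = l%:R * \sum_(j < k) c j.
  by rewrite mulr_sumr; apply: eq_bigr => j _; rewrite cnt.
rewrite /commH sumrB -[\sum_(i < k) 2^-1 * _]mulr_sumr.
ring.
Qed.
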